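(* Let $k\ge1$ and let $F$ be a partially colored forest. If Alice can win the $k$-Modified Coloring Game on every trunk in $\mathcal{R}(F)$, then she can win the $k$-Modified Coloring Game on $\mathcal{R}(F)$.
   Context: A partial coloring of a graph assigns to some vertices colors from a fixed set $C$ of $k$ colors so that adjacent colored vertices receive different colors; a color is legal for an uncolored vertex $v$ if no neighbor of $v$ has that color. The $k$-Modified Coloring Game ($k$-MCG) on a partially colored graph: Bob and Alice alternate turns, Bob first, each turn coloring an uncolored vertex with a legal color from $C$, except that Bob may choose to pass on any of his turns. Bob wins if at some point an uncolored vertex has no legal color; Alice wins if every vertex becomes colored. For a partially colored forest $F$, a trunk of $F$ is a maximal connected subgraph $R$ of $F$ such that every colored vertex of $R$ is a leaf of $R$. $\mathcal{R}(F)$ denotes the partially colored forest that is the disjoint union of all trunks of $F$ (a colored vertex lying in several trunks appears as a separate colored copy in each of them). *)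

(* Defs.v *)
From mathcomp Require Import all_boot.
Set Implicit Arguments. Unset Strict Implicit. Unset Printing Implicit Defensive.

(* A simple graph is a symmetric irreflexive relation [e] on a finType.
   A partial coloring with the fixed color set C = 'I_k is a map
   V -> option 'I_k (None = uncolored). *)

Section Game.
Variables (k : nat) (T : finType) (e : rel T).

Definition pcol := T -> option 'I_k.

Definition proper_pcol (c : pcol) : Prop :=
  forall x y, e x y -> c x != None -> c x != c y.

Definition legal (c : pcol) (v : T) (a : 'I_k) : Prop :=
  forall u, e v u -> c u != Some a.

(* some uncolored vertex has no legal color: Bob has won *)
Definition stuck (c : pcol) : Prop :=
  exists v, c v = None /\ forall a, ~ legal c v a.

Definition all_colored (c : pcol) : Prop := forall v, c v <> None.

Definition upd (c : pcol) (v : T) (a : 'I_k) : pcol :=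
  fun x => if x == v then Some a else c x.

(* [AliceWinsB c]: from position c with Bob to move, Alice has a strategy
   forcing a win; [AliceWinsA c]: same with Alice to move.  Bob may pass. *)
Inductive AliceWinsB (c : pcol) : Prop :=
| AWB_done : all_colored c -> AliceWinsB c
| AWB_step : ~ stuck c ->
    AliceWinsA c ->                                  (* Bob passes *)
    (forall v a, c v = None -> legal c v a -> AliceWinsA (upd c v a)) ->
    AliceWinsB c
with AliceWinsA (c : pcol) : Prop :=
| AWA_done : all_colored c -> AliceWinsA c
| AWA_step : forall v a, ~ stuck c -> c v = None -> legal c v a ->
    AliceWinsB (upd c v a) -> AliceWinsA c.

(* Alice can win the k-MCG on the partially colored graph (T, e, c)
   (Bob moves first). *)
Definition alice_wins_MCG (c : pcol) : Prop := AliceWinsB c.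

End Game.

Section Trunks.
Variables (k : nat) (V : finType) (e : rel V) (c : pcol k V).

Definition forest : Prop :=
  ~ exists p : seq V, [&& 3 <= size p, uniq p & cycle e p].

Definition induced_rel (S : {set V}) : rel V :=
  [rel a b | [&& a \in S, b \in S & e a b]].

Definition connected_set (S : {set V}) : bool :=
  (S != set0) && [forall x in S, forall y in S, connect (induced_rel S) x y].

Definition colored_leaves (S : {set V}) : bool :=
  [forall v in S, (c v != None) ==> (#|[set y in S | e v y]| == 1)].

Definition trunk_prop (S : {set V}) : bool :=
  connected_set S && colored_leaves S.

(* a trunk (identified with its vertex set; in a forest a connected
   subgraph is the induced subgraph on its vertex set) *)
Definition is_trunk (S : {set V}) : bool :=
  trunk_prop S &&
  [forall S' : {set V}, (S \subset S') && trunk_prop S' ==> (S' == S)].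

Definition trunk_rel (S : {set V}) : rel {x : V | x \in S} :=
  fun a b => e (val a) (val b).
Definition trunk_col (S : {set V}) : pcol k {x : V | x \in S} :=
  fun a => c (val a).

(* R(F): disjoint union of all trunks; a vertex is a pair (trunk, vertex) *)
Definition RF_vert := {p : {set V} * V | is_trunk p.1 && (p.2 \in p.1)}.
Definition RF_rel : rel RF_vert :=
  fun a b => ((val a).1 == (val b).1) && e (val a).2 (val b).2.
Definition RF_col : pcol k RF_vert := fun a => c (val a).2.

End Trunks.

Arguments trunk_rel {V} e S.
Arguments trunk_col {k V} c S.
Arguments RF_rel {k V} e c.
Arguments RF_col {k V} e c.
Arguments is_trunk {k V} e c S.

(* Main.v *)
Require Import Defs.
From mathcomp Require Import all_boot.
From Stdlib Require Import FunctionalExtensionality.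

Section Union.
Variables (k : nat) (W : finType) (E : rel W) (I : eqType) (T : I -> finType)
  (e : forall i, rel (T i)) (f : forall i, T i -> W).
Hypothesis Hsurj : forall w, exists i x, f i x = w.
Hypothesis Hinj : forall i j x y, f i x = f j y -> i = j.
Hypothesis Hinj2 : forall i x y, f i x = f i y -> x = y.
Hypothesis HE1 : forall i x w, E (f i x) w -> exists2 y, w = f i y & e i x y.
Hypothesis HE2 : forall i x y, e i x y -> E (f i x) (f i y).

Definition res (C : pcol k W) i : pcol k (T i) := fun x => C (f i x).

Lemma legal_res C i x a : legal E C (f i x) a <-> legal (e i) (res C i) x a.
Proof.
rewrite /legal /res; split.
- move=> H u hu; exact: H _ (HE2 _ _ _ hu).
- move=> H u /HE1 [y -> hy]; exact: H _ hy.
Qed.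

Lemma res_upd_same C i x a : res (upd C (f i x) a) i = upd (res C i) x a.
Proof.
apply: functional_extensionality => y; rewrite /res /upd.
case: (eqVneq y x) => [->|hne]; first by rewrite eqxx.
case: (eqVneq (f i y) (f i x)) => // /Hinj2 hh; by rewrite hh eqxx in hne.
Qed.

Lemma res_upd_other C i j x a : j != i -> res (upd C (f i x) a) j = res C j.
Proof.
move=> hji; apply: functional_extensionality => y; rewrite /res /upd.
case: (eqVneq (f j y) (f i x)) => // /Hinj hh; by rewrite hh eqxx in hji.
Qed.

Lemma notstuck_B (i : I) (c' : pcol k (T i)) : AliceWinsB (e i) c' -> ~ stuck (e i) c'.
Proof.
case=> [hall [v [hv _]]|//]; exact: hall v hv.
Qed.

Lemma notstuck_A (i : I) (c' : pcol k (T i)) : AliceWinsA (e i) c' -> ~ stuck (e i) c'.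
Proof.
case=> [hall [v [hv _]]|//]; exact: hall v hv.
Qed.

Lemma notstuck_union C : (forall i, ~ stuck (e i) (res C i)) -> ~ stuck E C.
Proof.
move=> H [w [hw hl]].
have [i [x hx]] := Hsurj w; subst w.
apply: (H i); exists x; split => // a /legal_res; exact: hl.
Qed.

Lemma card_upd (C : pcol k W) w a : C w = None ->
  #|[set x | upd C w a x == None]| < #|[set x | C x == None]|.
Proof.
move=> hw; apply: proper_card; apply/properP; split.
- apply/subsetP => x; rewrite !inE /upd; by case: (x == w).
- exists w; by rewrite !inE /upd ?eqxx ?hw.
Qed.

Lemma main n : forall C, #|[set x | C x == None]| < n ->
 (forall i0, AliceWinsA (e i0) (res C i0) ->
    (forall j, j != i0 -> AliceWinsB (e j) (res C j)) -> AliceWinsA E C) /\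
 ((forall j, AliceWinsB (e j) (res C j)) -> AliceWinsB E C).
Proof.
elim: n => [//|n IH] C; rewrite ltnS => hC.
have stepA : forall i0 v a, ~ stuck (e i0) (res C i0) -> res C i0 v = None ->
   legal (e i0) (res C i0) v a -> AliceWinsB (e i0) (upd (res C i0) v a) ->
   (forall j, j != i0 -> AliceWinsB (e j) (res C j)) -> AliceWinsA E C.
  move=> i0 v a hns hv hl hb hoth.
  apply: (AWA_step (v := f i0 v) (a := a)).
  - apply: notstuck_union => j; case: (eqVneq j i0) => [->//|hj].
    exact: notstuck_B (hoth j hj).
  - exact: hv.
  - by apply/legal_res.
  - have lt : #|[set x | upd C (f i0 v) a x == None]| < n.
      exact: leq_trans (@card_upd C _ a hv) hC.
    apply: (proj2 (IH _ lt)) => j; case: (eqVneq j i0) => [->|hj].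
    + by rewrite res_upd_same.
    + rewrite res_upd_other //; exact: hoth.
have BtoA : (forall j, AliceWinsB (e j) (res C j)) -> AliceWinsA E C.
  move=> HB; case: (boolP [forall w, C w != None]) => [/forallP H|/forallPn [w Hw]].
    by apply: AWA_done => w; apply/eqP.
  have {Hw} Hw : C w = None by apply/eqP; rewrite negbK in Hw.
  have [i [x hx]] := Hsurj w; subst w.
  case: (HB i) => [hall|_ hA _]; first by case: (hall x).
  case: hA => [hall|v a hns hv hl hb]; first by case: (hall x).
  apply: (stepA i v a) => // j _; exact: HB.
split.
- move=> i0 hA hoth; case: hA => [hall|v a hns hv hl hb].
  + apply: BtoA => j; case: (eqVneq j i0) => [->|hj]; last exact: hoth.
    exact: AWB_done.
  + exact: (stepA i0 v a).
- move=> HB; case: (boolP [forall w, C w != None]) => [/forallP H|hnc].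
    by apply: AWB_done => w; apply/eqP.
  apply: AWB_step.
  + apply: notstuck_union => j; exact: notstuck_B (HB j).
  + exact: BtoA.
  + move=> w a hw hl.
    have [i [x hx]] := Hsurj w; subst w.
    case: (HB i) => [hall|_ _ hmv]; first by case: (hall x).
    have lt : #|[set y | upd C (f i x) a y == None]| < n.
      exact: leq_trans (@card_upd C _ a hw) hC.
    apply: (proj1 (IH _ lt) i).
    * rewrite res_upd_same; apply: hmv => //; by apply/legal_res.
    * move=> j hj; rewrite res_upd_other //; exact: HB.
Qed.

Lemma union_wins C : (forall j, AliceWinsB (e j) (res C j)) -> AliceWinsB E C.
Proof. exact: (proj2 (@main _ C (ltnSn _))). Qed.

End Union.

Theorem lemma2p2 (k : nat) (V : finType) (e : rel V) (c : pcol k V) :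
  1 <= k -> symmetric e -> irreflexive e -> forest e -> proper_pcol e c ->
  (forall S : {set V}, is_trunk e c S ->
     alice_wins_MCG (trunk_rel e S) (trunk_col c S)) ->
  alice_wins_MCG (RF_rel e c) (RF_col e c).
Proof.
move=> _ _ _ _ _ H.
pose I := {S : {set V} | is_trunk e c S}.
pose T := fun i : I => ({x : V | x \in sval i} : finType).
pose f := fun (i : I) (x : T i) =>
  (exist _ (sval i, sval x) (introT andP (conj (svalP i) (svalP x))) : RF_vert e c).
have Hsurj : forall w, exists i x, f i x = w.
  case=> [[S v] /= hw]; have /andP [h1 h2] := hw.
  exists (exist _ S h1); exists (exist _ v h2 : T (exist _ S h1)).
  exact: val_inj.
have Hinj : forall i j x y, f i x = f j y -> i = j.
  move=> i j x y /(congr1 (fun w => (sval w).1)) /= h; exact: val_inj.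
have Hinj2 : forall i x y, f i x = f i y -> x = y.
  move=> i x y /(congr1 (fun w => (sval w).2)) /= h; exact: val_inj.
apply: (@union_wins k _ (RF_rel e c) _ T (fun i => trunk_rel e (sval i)) f) => //.
- move=> i x w hE.
  have [j [y hy]] := Hsurj w; subst w.
  move: hE; rewrite /RF_rel /= => /andP [/eqP h1 h2].
  have hij : i = j by apply: val_inj.
  subst j; by exists y.
- move=> i x y hxy; rewrite /RF_rel /= eqxx; exact: hxy.
- move=> j; exact: (H _ (svalP j)).
Qed.
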